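(* Assume $\cos(\varphi_{GU})>0$. Then $\|\mathcal{P}_{G\,P_U(G)^\perp}\|=\frac{1}{\cos(\varphi_{GU})}$ and, for all $f\in H$, $$\|f-P_Gf\|\le\|f-\mathcal{P}_{G\,P_U(G)^\perp}f\|\le\frac{1}{\cos(\varphi_{GU})}\|f-P_Gf\|.$$ If moreover $G\neq H$, the constant $\frac{1}{\cos(\varphi_{GU})}$ in the upper bound cannot be replaced by any smaller constant.
   Context: $H$ is a Hilbert space, $U$ and $G$ are closed subspaces of $H$. $P_W$ denotes the orthogonal projection onto a closed subspace $W$, and $P_U(G)=\{P_Ug:g\in G\}$. For closed subspaces $S,W$, $\cos(\varphi_{SW}):=\inf_{s\in S,\|s\|=1}\|P_Ws\|$. When $\cos(\varphi_{GU})>0$ one has $H=G\oplus P_U(G)^\perp$, and $\mathcal{P}_{G\,P_U(G)^\perp}$ denotes the oblique projection with range $G$ and kernel $P_U(G)^\perp$. *)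

(* Defs.v *)
From Stdlib Require Import Reals.
Open Scope R_scope.

Record Hilbert := {
  hcar :> Type;
  hzero : hcar;
  hadd : hcar -> hcar -> hcar;
  hopp : hcar -> hcar;
  hscal : R -> hcar -> hcar;
  hinner : hcar -> hcar -> R;
  hadd_assoc : forall x y z, hadd x (hadd y z) = hadd (hadd x y) z;
  hadd_comm : forall x y, hadd x y = hadd y x;
  hadd_0 : forall x, hadd x hzero = x;
  hadd_opp : forall x, hadd x (hopp x) = hzero;
  hscal_1 : forall x, hscal 1 x = x;
  hscal_assoc : forall a b x, hscal a (hscal b x) = hscal (a * b) x;
  hscal_distr_v : forall a x y, hscal a (hadd x y) = hadd (hscal a x) (hscal a y);
  hscal_distr_s : forall a b x, hscal (a + b) x = hadd (hscal a x) (hscal b x);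
  hinner_sym : forall x y, hinner x y = hinner y x;
  hinner_add_l : forall x y z, hinner (hadd x y) z = hinner x z + hinner y z;
  hinner_scal_l : forall a x y, hinner (hscal a x) y = a * hinner x y;
  hinner_pos : forall x, 0 <= hinner x x;
  hinner_def : forall x, hinner x x = 0 -> x = hzero;
  hcomplete : forall u : nat -> hcar,
    (forall eps, 0 < eps -> exists N, forall m n, (N <= m)%nat -> (N <= n)%nat ->
       sqrt (hinner (hadd (u m) (hopp (u n))) (hadd (u m) (hopp (u n)))) < eps) ->
    exists l, forall eps, 0 < eps -> exists N, forall n, (N <= n)%nat ->
       sqrt (hinner (hadd (u n) (hopp l)) (hadd (u n) (hopp l))) < eps
}.

Arguments hzero {h}.
Arguments hadd {h}.
Arguments hopp {h}.
Arguments hscal {h}.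
Arguments hinner {h}.

Definition hsub {H : Hilbert} (x y : H) : H := hadd x (hopp y).

Definition hnorm {H : Hilbert} (x : H) : R := sqrt (hinner x x).

Definition hconv {H : Hilbert} (u : nat -> H) (l : H) : Prop :=
  forall eps, 0 < eps -> exists N, forall n, (N <= n)%nat -> hnorm (hsub (u n) l) < eps.

Definition closed_subspace {H : Hilbert} (S : H -> Prop) : Prop :=
  S hzero /\
  (forall x y, S x -> S y -> S (hadd x y)) /\
  (forall a x, S x -> S (hscal a x)) /\
  (forall u l, (forall n, S (u n)) -> hconv u l -> S l).

Definition is_orth_proj {H : Hilbert} (W : H -> Prop) (P : H -> H) : Prop :=
  forall f, W (P f) /\ forall w, W w -> hinner (hsub f (P f)) w = 0.

Definition image_set {H : Hilbert} (P : H -> H) (G : H -> Prop) : H -> Prop :=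
  fun y => exists g, G g /\ y = P g.

Definition orth {H : Hilbert} (S : H -> Prop) : H -> Prop :=
  fun x => forall s, S s -> hinner x s = 0.

Definition is_oblique_proj {H : Hilbert} (G K : H -> Prop) (Q : H -> H) : Prop :=
  forall f, G (Q f) /\ K (hsub f (Q f)).

Definition is_inf (E : R -> Prop) (c : R) : Prop :=
  (forall x, E x -> c <= x) /\ (forall b, (forall x, E x -> b <= x) -> b <= c).

Definition is_sup (E : R -> Prop) (c : R) : Prop :=
  (forall x, E x -> x <= c) /\ (forall b, (forall x, E x -> x <= b) -> c <= b).

(* cos(phi_{S W}) = inf_{s in S, ||s|| = 1} ||P_W s||, with P_W the orthogonal
   projection onto W; c is that infimum *)
Definition is_cos_angle {H : Hilbert} (S : H -> Prop) (PW : H -> H) (c : R) : Prop :=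
  is_inf (fun r => exists s, S s /\ hnorm s = 1 /\ r = hnorm (PW s)) c.

Definition is_opnorm {H : Hilbert} (Q : H -> H) (c : R) : Prop :=
  is_sup (fun r => exists f, hnorm f <= 1 /\ r = hnorm (Q f)) c.

(* Main.v *)
Require Import Defs.
From Stdlib Require Import Reals Lra Psatz Classical.
Open Scope R_scope.

Lemma ip0l {H : Hilbert} (y : H) : hinner hzero y = 0.
Proof. pose proof (hinner_add_l H hzero hzero y) as E. rewrite hadd_0 in E. lra. Qed.
Lemma ip0r {H : Hilbert} (y : H) : hinner y hzero = 0.
Proof. rewrite hinner_sym. apply ip0l. Qed.
Lemma ipol {H : Hilbert} (x y : H) : hinner (hopp x) y = - hinner x y.
Proof. pose proof (hinner_add_l H x (hopp x) y) as E. rewrite hadd_opp, ip0l in E. lra. Qed.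
Lemma ipor {H : Hilbert} (x y : H) : hinner y (hopp x) = - hinner y x.
Proof. rewrite !(hinner_sym H y). apply ipol. Qed.
Lemma ipar {H : Hilbert} (x y z : H) : hinner x (hadd y z) = hinner x y + hinner x z.
Proof. rewrite !(hinner_sym H x). apply hinner_add_l. Qed.
Lemma ipsr {H : Hilbert} a (x y : H) : hinner x (hscal a y) = a * hinner x y.
Proof. rewrite !(hinner_sym H x). apply hinner_scal_l. Qed.

Ltac ex := unfold hsub in *; repeat progress rewrite ?hinner_add_l, ?ipar, ?ipol, ?ipor, ?hinner_scal_l, ?ipsr, ?ip0l, ?ip0r in *.
Ltac sy a b := rewrite ?(hinner_sym _ a b) in *.

Lemma sub0_eq {H : Hilbert} (x y : H) : hsub x y = hzero -> x = y.
Proof. unfold hsub; intro E.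
 transitivity (hadd (hadd x (hopp y)) y).
 - rewrite <- hadd_assoc, (hadd_comm _ (hopp y) y), hadd_opp, hadd_0. reflexivity.
 - rewrite E, hadd_comm, hadd_0. reflexivity.
Qed.

Lemma vec_eq {H : Hilbert} (x y : H) : (forall z, hinner x z = hinner y z) -> x = y.
Proof. intro E. apply sub0_eq. apply hinner_def.
 unfold hsub. rewrite hinner_add_l, ipol, E. ring. Qed.

Lemma opp_scal {H : Hilbert} (x : H) : hopp x = hscal (-1) x.
Proof. apply vec_eq; intro z. rewrite ipol, hinner_scal_l. ring. Qed.

Lemma cs_sub {H : Hilbert} (S : H -> Prop) : closed_subspace S ->
  forall x y, S x -> S y -> S (hsub x y).
Proof. intros (h0&ha&hs&_) x y Hx Hy. unfold hsub. rewrite opp_scal. auto. Qed.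
Lemma cs_scal {H : Hilbert} (S : H -> Prop) : closed_subspace S ->
  forall a x, S x -> S (hscal a x).
Proof. intros (h0&ha&hs&_). auto. Qed.
Lemma cs_zero {H : Hilbert} (S : H -> Prop) : closed_subspace S -> S hzero.
Proof. intros (h0&_). auto. Qed.

Lemma hn_ge0 {H : Hilbert} (x:H) : 0 <= hnorm x. Proof. apply sqrt_pos. Qed.
Lemma hn_sq {H : Hilbert} (x:H) : hnorm x * hnorm x = hinner x x.
Proof. apply sqrt_sqrt, hinner_pos. Qed.
Lemma hn_unique {H : Hilbert} (x:H) r : 0 <= r -> r * r = hinner x x -> hnorm x = r.
Proof. intros P E. unfold hnorm. rewrite <- E. apply sqrt_square; auto. Qed.
Lemma hn_scal {H : Hilbert} a (x:H) : 0 <= a -> hnorm (hscal a x) = a * hnorm x.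
Proof. intro P. apply hn_unique. pose proof (hn_ge0 x); nra.
 rewrite hinner_scal_l, ipsr. pose proof (hn_sq x). nra. Qed.

Lemma cs {H : Hilbert} (x y : H) : hinner x y <= hnorm x * hnorm y.
Proof.
 pose proof (hinner_pos _ (hsub (hscal (hinner y y) x) (hscal (hinner x y) y))) as P.
 ex. sy y x.
 pose proof (hn_sq x); pose proof (hn_sq y); pose proof (hn_ge0 x); pose proof (hn_ge0 y).
 pose proof (hinner_pos _ y).
 destruct (Req_dec (hinner y y) 0) as [E|E].
 - apply hinner_def in E. subst y. rewrite ip0r. apply Rmult_le_pos; apply hn_ge0.
 - assert (hinner x y * hinner x y <= hinner x x * hinner y y) by nra.
   assert (hinner x y * hinner x y <= (hnorm x * hnorm y) * (hnorm x * hnorm y)).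
   { replace ((hnorm x * hnorm y) * (hnorm x * hnorm y)) with ((hnorm x * hnorm x) * (hnorm y * hnorm y)) by ring. congruence. }
   assert (0 <= hnorm x * hnorm y) by (apply Rmult_le_pos; auto).
   nra.
Qed.

Lemma proj_in {H : Hilbert} (W : H -> Prop) P : is_orth_proj W P -> forall f, W (P f).
Proof. intros h f; apply h. Qed.
Lemma proj_orth {H : Hilbert} (W : H -> Prop) P : is_orth_proj W P ->
  forall f w, W w -> hinner (hsub f (P f)) w = 0.
Proof. intros h f; apply h. Qed.

Lemma proj_uniq {H : Hilbert} (W : H -> Prop) P : closed_subspace W -> is_orth_proj W P ->
  forall f p, W p -> (forall w, W w -> hinner (hsub f p) w = 0) -> P f = p.
Proof. intros cW hP f p Wp Hp. apply sub0_eq, hinner_def.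
 assert (Wd : W (hsub (P f) p)) by (apply cs_sub; auto; apply hP).
 pose proof (proj_orth W P hP f _ Wd) as E1. pose proof (Hp _ Wd) as E2.
 ex. lra. Qed.

Lemma best_approx {H : Hilbert} (W : H -> Prop) P : closed_subspace W -> is_orth_proj W P ->
  forall f x, W x -> hinner (hsub f (P f)) (hsub f (P f)) <= hinner (hsub f x) (hsub f x).
Proof. intros cW hP f x Wx.
 assert (Wd : W (hsub (P f) x)) by (apply cs_sub; auto; apply hP).
 pose proof (proj_orth W P hP f _ Wd) as E1.
 pose proof (hinner_pos _ (hsub (P f) x)).
 ex. sy (P f) f. sy x f. sy x (P f). lra. Qed.

Lemma hn_le {H : Hilbert} (x y : H) : hinner x x <= hinner y y -> hnorm x <= hnorm y.
Proof. intro; unfold hnorm; apply sqrt_le_1_alt; auto. Qed.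

Lemma nsq_add {H : Hilbert} (x y : H) :
  hinner (hadd x y) (hadd x y) = hinner x x + 2 * hinner x y + hinner y y.
Proof. rewrite hinner_add_l, !ipar, (hinner_sym _ y x). ring. Qed.

Lemma sq_le (x y : R) : 0 <= y -> x * x <= y * y -> x <= y.
Proof. intros Hy Hs. destruct (Rle_dec x y) as [|N]; auto. exfalso.
 assert (y < x) by lra. assert (y * y < x * x).
 { apply Rle_lt_trans with (y * x). apply Rmult_le_compat_l; lra. apply Rmult_lt_compat_r; lra. }
 lra. Qed.

Lemma le_div (c x y : R) : 0 < c -> c * x <= y -> x <= (1 / c) * y.
Proof. intros Hc Hl. replace x with ((c * x) * / c) by (field; lra).
 replace ((1/c) * y) with (y * / c) by (field; lra).
 apply Rmult_le_compat_r; [left; apply Rinv_0_lt_compat; lra|lra]. Qed.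

Theorem theorem2p5 (H : Hilbert) (U G : H -> Prop)
  (hU : closed_subspace U) (hG : closed_subspace G)
  (PU PG Q : H -> H)
  (hPU : is_orth_proj U PU) (hPG : is_orth_proj G PG)
  (c : R) (hc : is_cos_angle G PU c) (hcpos : 0 < c)
  (hQ : is_oblique_proj G (orth (image_set PU G)) Q) :
  is_opnorm Q (1 / c) /\
  (forall f : H,
     hnorm (hsub f (PG f)) <= hnorm (hsub f (Q f)) /\
     hnorm (hsub f (Q f)) <= (1 / c) * hnorm (hsub f (PG f))) /\
  ((exists h : H, ~ G h) ->
     forall K : R, K < 1 / c ->
       exists f : H, K * hnorm (hsub f (PG f)) < hnorm (hsub f (Q f))).
Proof.
  destruct hc as [hcl hcg].
  assert (PUin : forall x, U (PU x)) by (apply proj_in; auto).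
  assert (PUo : forall f w, U w -> hinner (hsub f (PU f)) w = 0) by (apply proj_orth; auto).
  assert (PGin : forall x, G (PG x)) by (apply proj_in; auto).
  assert (Qin : forall f, G (Q f)) by (intro f; apply hQ).
  assert (Qo : forall f g, G g -> hinner (hsub f (Q f)) (PU g) = 0).
  { intros f g Gg. apply (proj2 (hQ f)). exists g; split; auto. }
  assert (PUip : forall x y, hinner x (PU y) = hinner (PU x) (PU y)).
  { intros x y. pose proof (PUo x (PU y) (PUin y)). ex. lra. }
  assert (PUsc : forall a x, PU (hscal a x) = hscal a (PU x)).
  { intros a x. apply (proj_uniq U PU hU hPU). apply cs_scal; auto.
    intros w Uw. pose proof (PUo x w Uw). ex.
    assert (E: hinner x w = hinner (PU x) w) by lra. rewrite E. ring. }
  assert (L1 : forall g, G g -> c * hnorm g <= hnorm (PU g)).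
  { intros g Gg. pose proof (hn_ge0 g). pose proof (hn_ge0 (PU g)).
    destruct (Req_dec (hnorm g) 0) as [E|E]. { rewrite E; lra. }
    assert (Pi : 0 <= / hnorm g) by (left; apply Rinv_0_lt_compat; lra).
    assert (Gs : G (hscal (/ hnorm g) g)) by (apply cs_scal; auto).
    assert (N1 : hnorm (hscal (/ hnorm g) g) = 1).
    { rewrite hn_scal by auto. field. auto. }
    pose proof (hcl _ (ex_intro _ _ (conj Gs (conj N1 eq_refl)))) as C.
    rewrite PUsc, hn_scal in C by auto.
    assert (c * hnorm g <= / hnorm g * hnorm (PU g) * hnorm g) by nra.
    replace (/ hnorm g * hnorm (PU g) * hnorm g) with (hnorm (PU g)) in * by (field; auto).
    auto. }
  assert (Quniq : forall f x, G x -> (forall g, G g -> hinner (hsub f x) (PU g) = 0) -> Q f = x).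
  { intros f x Gx Hx. apply sub0_eq.
    assert (Gd : G (hsub (Q f) x)) by (apply cs_sub; auto).
    set (d := hsub (Q f) x) in *.
    pose proof (Qo f d Gd) as E1. pose proof (Hx d Gd) as E2.
    assert (E3 : hinner d (PU d) = 0).
    { set (pd := PU d) in *. clearbody pd. unfold d. ex. lra. }
    rewrite PUip in E3. pose proof (L1 d Gd).
    pose proof (hn_sq (PU d)). pose proof (hn_sq d). pose proof (hn_ge0 d). pose proof (hn_ge0 (PU d)).
    assert (hnorm (PU d) = 0) by nra.
    assert (hnorm d = 0) by nra.
    apply hinner_def. nra. }
  assert (small : forall e, c < e -> exists s, G s /\ hnorm s = 1 /\ hnorm (PU s) < e).
  { intros e He. apply NNPP. intro N. assert (e <= c); [|lra].
    apply hcg. intros r (s & Gs & Ns & ->). apply Rnot_lt_le. intro L. apply N. exists s. auto. }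
  assert (PUle : forall x, hinner (PU x) (PU x) <= hinner x x).
  { intro x. pose proof (PUo x (PU x) (PUin x)). pose proof (hinner_pos _ (hsub x (PU x))).
    ex. sy (PU x) x. lra. }
  assert (c1 : c <= 1).
  { destruct (small (c+1)) as (s & Gs & Ns & _); [lra|].
    pose proof (hcl _ (ex_intro _ s (conj Gs (conj Ns eq_refl)))).
    pose proof (hn_le _ _ (PUle s)). lra. }
  assert (LQ : forall f, c * hnorm (Q f) <= hnorm f).
  { intro f. pose proof (Qo f (Q f) (Qin f)) as E. ex.
    rewrite (PUip (Q f)) in E. pose proof (cs f (PU (Q f))). pose proof (hn_sq (PU (Q f))).
    pose proof (hn_ge0 (PU (Q f))). pose proof (hn_ge0 f). pose proof (L1 _ (Qin f)).
    assert (hnorm (PU (Q f)) <= hnorm f) by nra. lra. }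

  assert (P2 : forall f : H,
     hnorm (hsub f (PG f)) <= hnorm (hsub f (Q f)) /\
     hnorm (hsub f (Q f)) <= (1 / c) * hnorm (hsub f (PG f))).
  { intro f. split.
    { apply hn_le. apply best_approx with (W:=G); auto. }
    assert (Gg : G (hsub (PG f) (Q f))) by (apply cs_sub; auto).
    pose proof (Qo f _ Gg) as F1.
    pose proof (PUo (hsub (PG f) (Q f)) _ (PUin (hsub (PG f) (Q f)))) as F2.
    pose proof (L1 _ Gg) as F3.
    set (A := PU (hsub (PG f) (Q f))) in *. clearbody A.
    set (w := hsub f (PG f)). set (k := hsub f (Q f)).
    set (g := hsub (PG f) (Q f)) in *. set (b := hsub g A).
    assert (Ek : k = hadd (hadd w A) b).
    { apply vec_eq; intro z. unfold k, w, b, g. ex. ring. }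
    assert (Eg : g = hadd A b).
    { apply vec_eq; intro z. unfold b, g. ex. ring. }
    assert (EK : hinner k k = hinner (hadd w A) (hadd w A) + 2 * hinner (hadd w A) b + hinner b b).
    { rewrite Ek, nsq_add. ring. }
    assert (EG : hinner g g = hinner A A + hinner b b).
    { assert (hinner b A = 0) by (unfold b; auto).
      rewrite Eg, nsq_add, (hinner_sym _ A b). lra. }
    assert (ES : hinner (hadd w A) (hadd w A) = hinner w w - hinner A A).
    { unfold w, k, g, b in *. ex.
      sy (PG f) f. sy (Q f) f. sy A f. sy (Q f) (PG f). sy A (PG f). sy A (Q f). lra. }
    pose proof (cs (hadd w A) b) as CS.
    pose proof (hn_sq k). pose proof (hn_sq w). pose proof (hn_sq A). pose proof (hn_sq b).
    pose proof (hn_sq g). pose proof (hn_sq (hadd w A)).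
    pose proof (hn_ge0 k). pose proof (hn_ge0 w). pose proof (hn_ge0 A). pose proof (hn_ge0 b).
    pose proof (hn_ge0 g). pose proof (hn_ge0 (hadd w A)).
    set (Kn := hnorm k) in *. set (Wn := hnorm w) in *. set (al := hnorm A) in *.
    set (be := hnorm b) in *. set (gn := hnorm g) in *. set (S := hnorm (hadd w A)) in *.
    clearbody Kn Wn al be gn S.
    assert (F3' : c * c * (al * al + be * be) <= al * al).
    { assert (0 <= c * gn) by nra.
      assert (c * gn * (c * gn) <= al * al) by (apply Rmult_le_compat; lra).
      assert (Eg2 : gn * gn = al * al + be * be) by lra.
      rewrite <- Eg2. nra. }
    assert (HK : Kn <= S + be) by (apply sq_le; nra).
    assert (HS : S * S = Wn * Wn - al * al) by nra.
    set (y := c * be).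
    assert (Hy : y * y <= (1 - c * c) * (al * al)) by (unfold y; nra).
    set (M := (1 - c * c) * (S * S) + c * c * (al * al)).
    assert (cc : c * c <= 1) by nra.
    assert (HM : 0 <= M) by (unfold M; apply Rplus_le_le_0_compat; apply Rmult_le_pos; nra).
    assert (Hy0 : 0 <= y) by (unfold y; nra).
    assert (Hsq : (2 * c * S * y) * (2 * c * S * y) <= M * M).
    { assert ((2 * c * S * y) * (2 * c * S * y) <= 4 * (c * c * (S * S)) * ((1 - c * c) * (al * al))).
      { replace ((2 * c * S * y) * (2 * c * S * y)) with (4 * (c * c * (S * S)) * (y * y)) by ring.
        apply Rmult_le_compat_l; [nra|auto]. }
      replace (4 * (c * c * (S * S)) * ((1 - c * c) * (al * al))) with
        (4 * ((1 - c * c) * (S * S)) * (c * c * (al * al))) in H0 by ring.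
      unfold M. pose proof (Rle_0_sqr ((1 - c * c) * (S * S) - c * c * (al * al))). unfold Rsqr in *. nra. }
    assert (Z2 : 2 * c * S * y <= M).
    { apply sq_le; auto. }
    assert (Z3 : c * c * ((S + be) * (S + be)) <= Wn * Wn).
    { unfold M, y in *. nra. }
    assert (Z4 : c * (S + be) <= Wn) by (apply sq_le; auto; nra).
    apply le_div; auto. nra. }
  split; [|split; [exact P2|]].
  { split.
    - intros r (f & Nf & ->). pose proof (LQ f). pose proof (le_div c (hnorm (Q f)) (hnorm f) hcpos H0).
      assert (0 < 1 / c) by (unfold Rdiv; rewrite Rmult_1_l; apply Rinv_0_lt_compat; lra).
      nra.
    - intros bb Hb. apply Rnot_lt_le; intro Lb.
      assert (Ex : exists s, G s /\ hnorm s = 1 /\ hnorm (PU s) * bb < 1).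
      { destruct (Rle_dec bb 0) as [Hn|Hp].
        - destruct (small (c+1)) as (s & Gs & Ns & Ls); [lra|]. exists s; repeat split; auto.
          pose proof (hn_ge0 (PU s)). nra.
        - assert (cb : c * bb < 1).
          { assert (c * bb < c * (1 / c)) by (apply Rmult_lt_compat_l; lra).
            replace (c * (1/c)) with 1 in * by (field; lra). auto. }
          destruct (small (/ bb)) as (s & Gs & Ns & Ls).
          { apply (Rmult_lt_reg_r bb); [lra|]. rewrite Rinv_l; lra. }
          exists s; repeat split; auto.
          apply (Rmult_lt_compat_r bb) in Ls; [|lra]. rewrite Rinv_l in Ls; lra. }
      destruct Ex as (s & Gs & Ns & Ls).
      pose proof (hcl _ (ex_intro _ s (conj Gs (conj Ns eq_refl)))) as Ca.
      set (al := hnorm (PU s)) in *.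
      assert (Pi : 0 <= / al) by (left; apply Rinv_0_lt_compat; lra).
      assert (Qe : Q (hscal (/ al) (PU s)) = hscal (/ al) s).
      { apply Quniq. apply cs_scal; auto. intros g Gg. ex. rewrite (PUip s). ring. }
      assert (N1 : hnorm (hscal (/ al) (PU s)) <= 1).
      { rewrite hn_scal by auto. unfold al. right; field. fold al; lra. }
      pose proof (Hb _ (ex_intro _ _ (conj N1 eq_refl))) as Hb1.
      rewrite Qe, hn_scal, Ns in Hb1 by auto.
      assert (al * (/ al * 1) <= al * bb) by (apply Rmult_le_compat_l; lra).
      replace (al * (/ al * 1)) with 1 in * by (field; lra). lra. }
  intros [h Nh] K HK.
  destruct (Rlt_le_dec K 1) as [K1|K1].
  - exists h. destruct (P2 h) as [Lo _].
    pose proof (hn_ge0 (hsub h (PG h))) as D0.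
    destruct (Req_dec (hnorm (hsub h (PG h))) 0) as [E|E].
    + exfalso. apply Nh. assert (Z : hsub h (PG h) = hzero).
      { apply hinner_def. rewrite <- hn_sq, E. ring. }
      apply sub0_eq in Z. rewrite Z. auto.
    + nra.
  - assert (cK : c * K < 1).
    { assert (c * K < c * (1 / c)) by (apply Rmult_lt_compat_l; lra).
      replace (c * (1/c)) with 1 in * by (field; lra). auto. }
    destruct (small (/ K)) as (s & Gs & Ns & Ls).
    { apply (Rmult_lt_reg_r K); [lra|]. rewrite Rinv_l; lra. }
    pose proof (hcl _ (ex_intro _ s (conj Gs (conj Ns eq_refl)))) as Ca.
    assert (aK : hnorm (PU s) * K < 1).
    { apply (Rmult_lt_compat_r K) in Ls; [|lra]. rewrite Rinv_l in Ls; lra. }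
    set (b := hsub s (PU s)).
    assert (Qb : Q b = hzero).
    { apply Quniq. apply cs_zero; auto. intros g Gg.
      pose proof (PUo s _ (PUin g)). unfold b. ex. lra. }
    exists b. rewrite Qb.
    assert (Eb : hnorm (hsub b hzero) = hnorm b).
    { unfold hnorm. f_equal. ex. ring. }
    rewrite Eb.
    pose proof (PUo s _ (PUin s)) as F.
    pose proof (hn_sq s) as S1. rewrite Ns in S1.
    pose proof (hn_sq (PU s)) as S2. pose proof (hn_sq b) as S3.
    assert (Eb2 : hinner b b = 1 - hinner (PU s) (PU s)).
    { unfold b. ex. sy (PU s) s. lra. }
    assert (Gt : G (hscal (hinner b b) s)) by (apply cs_scal; auto).
    pose proof (best_approx G PG hG hPG b _ Gt) as BA.
    assert (Et : hinner (hsub b (hscal (hinner b b) s)) (hsub b (hscal (hinner b b) s))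
                 = hinner (PU s) (PU s) * hinner b b).
    { rewrite Eb2. unfold b. ex. sy (PU s) s. rewrite <- S1 at 1. nra. }
    rewrite Et in BA.
    pose proof (hn_sq (hsub b (PG b))) as S4.
    pose proof (hn_ge0 (hsub b (PG b))). pose proof (hn_ge0 b). pose proof (hn_ge0 (PU s)).
    set (D := hnorm (hsub b (PG b))) in *. set (al := hnorm (PU s)) in *. set (be := hnorm b) in *.
    clearbody D al be.
    assert (al < 1).
    { assert (al * K < 1 * K) by nra. nra. }
    assert (Pbe : 0 < be) by nra.
    assert (Dl : D <= al * be).
    { apply sq_le; [nra|]. nra. }
    assert (K * D <= K * (al * be)) by (apply Rmult_le_compat_l; lra).
    nra.
Qed.
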